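(* Consider on $\mathcal D=[0,+\infty)^3$ the system $$\dot E=\beta_E F\Big(1-\frac{E}{K}\Big)-(\nu_E+\delta_E)E,\qquad \dot M=(1-\nu)\nu_E E-\delta_M M,\qquad \dot F=\nu\nu_E E-\delta_F F .$$ If $\mathcal R_0\le 1$, then the equilibrium $\mathbf 0=(0,0,0)^T$ is globally asymptotically stable in $\mathcal D$ for this system.
   Context: Parameters: $\beta_E,\nu_E,\delta_E,\delta_M,\delta_F,K>0$ and $\nu\in(0,1)$. The basic offspring number is $\mathcal R_0:=\dfrac{\beta_E\nu\nu_E}{\delta_F(\nu_E+\delta_E)}$. The set $\mathcal D$ is positively invariant and solutions starting in $\mathcal D$ are defined for all $t\ge0$. An equilibrium $x_e\in\mathcal D$ is stable in $\mathcal D$ if for every $\varepsilon>0$ there is $\delta>0$ such that every solution with $x(0)\in\mathcal D$, $\|x(0)-x_e\|<\delta$ satisfies $\|x(t)-x_e\|<\varepsilon$ for all $t>0$; it is a global attractor in $\mathcal D$ if every solution with $x(0)\in\mathcal D$ satisfies $x(t)\to x_e$ as $t\to\infty$; it is globally asymptotically stable in $\mathcal D$ if it is both stable and a global attractor in $\mathcal D$. *)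

(* Defs.v *)
From Stdlib Require Import Reals.
Open Scope R_scope.

Definition basic_offspring (bE nuE dE dF nu : R) : R :=
  bE * nu * nuE / (dF * (nuE + dE)).

Definition norm3 (a b c : R) : R := sqrt (a * a + b * b + c * c).

Definition inD (a b c : R) : Prop := 0 <= a /\ 0 <= b /\ 0 <= c.

Definition right_cont0 (f : R -> R) : Prop :=
  forall eps, 0 < eps -> exists d, 0 < d /\
    forall t, 0 <= t < d -> Rabs (f t - f 0) < eps.

(* (E,M,F) is a solution of the system on [0,+oo): continuous at t = 0
   (from the right) and satisfying the ODE at every t > 0.  Values at
   t < 0 are irrelevant. *)
Definition is_solution (bE nuE dE dM dF K nu : R) (E M F : R -> R) : Prop :=
  (forall t, 0 < t ->
     derivable_pt_lim E t (bE * F t * (1 - E t / K) - (nuE + dE) * E t) /\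
     derivable_pt_lim M t ((1 - nu) * nuE * E t - dM * M t) /\
     derivable_pt_lim F t (nu * nuE * E t - dF * F t)) /\
  right_cont0 E /\ right_cont0 M /\ right_cont0 F.

Definition stable0_in_D (bE nuE dE dM dF K nu : R) : Prop :=
  forall eps, 0 < eps -> exists delta, 0 < delta /\
    forall E M F : R -> R,
      is_solution bE nuE dE dM dF K nu E M F ->
      inD (E 0) (M 0) (F 0) ->
      norm3 (E 0) (M 0) (F 0) < delta ->
      forall t, 0 < t -> norm3 (E t) (M t) (F t) < eps.

Definition attractor0_in_D (bE nuE dE dM dF K nu : R) : Prop :=
  forall E M F : R -> R,
    is_solution bE nuE dE dM dF K nu E M F ->
    inD (E 0) (M 0) (F 0) ->
    forall eps, 0 < eps -> exists T, forall t, T <= t ->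
      norm3 (E t) (M t) (F t) < eps.

Definition GAS0_in_D (bE nuE dE dM dF K nu : R) : Prop :=
  stable0_in_D bE nuE dE dM dF K nu /\ attractor0_in_D bE nuE dE dM dF K nu.

(* Main.v *)
Require Import Defs.
From Stdlib Require Import Reals Lra Psatz Classical.
Open Scope R_scope.

Lemma dl_eq f x l l' : derivable_pt_lim f x l -> l = l' -> derivable_pt_lim f x l'.
Proof. intros H ->; exact H. Qed.

Lemma dl_cont f x l : derivable_pt_lim f x l -> continuity_pt f x.
Proof. intro H. apply derivable_continuous_pt. exists l. exact H. Qed.

Lemma rc_lim f : right_cont0 f <-> limit1_in f (fun x => 0 <= x) (f 0) 0.
Proof.
  unfold right_cont0, limit1_in, limit_in; simpl; unfold R_dist; split.
  - intros H eps Heps. destruct (H eps Heps) as [d [Hd Hf]].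
    exists d; split; auto. intros x [Hx Hxd]. apply Hf. rewrite Rminus_0_r in Hxd.
    split; auto. rewrite Rabs_right in Hxd; lra.
  - intros H eps Heps. destruct (H eps Heps) as [d [Hd Hf]].
    exists d; split; auto. intros x [Hx Hxd]. apply Hf. split; auto.
    rewrite Rminus_0_r, Rabs_right; lra.
Qed.

Lemma rc_plus f g : right_cont0 f -> right_cont0 g -> right_cont0 (fun x => f x + g x).
Proof. rewrite !rc_lim. intros. apply limit_plus; auto. Qed.
Lemma rc_mult f g : right_cont0 f -> right_cont0 g -> right_cont0 (fun x => f x * g x).
Proof. rewrite !rc_lim. intros. apply limit_mul; auto. Qed.
Lemma rc_const c : right_cont0 (fun _ => c).
Proof. intros e He. exists 1. split; [lra|]. intros. rewrite Rminus_diag, Rabs_R0. lra. Qed.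
Lemma rc_cont f : continuity_pt f 0 -> right_cont0 f.
Proof.
  intros H eps Heps. destruct (H eps Heps) as [d [Hd Hf]].
  exists d; split; auto. intros t [Ht Htd].
  destruct (Req_dec t 0) as [->|Hn].
  - rewrite Rminus_diag, Rabs_R0; lra.
  - apply Hf. split. split. exact I. auto. simpl; unfold R_dist. rewrite Rminus_0_r, Rabs_right; lra.
Qed.
Lemma rc_comp (p f : R -> R) : continuity_pt p (f 0) -> right_cont0 f -> right_cont0 (fun x => p (f x)).
Proof.
  intros Hp Hf eps Heps. destruct (Hp eps Heps) as [d1 [Hd1 H1]].
  destruct (Hf d1 Hd1) as [d [Hd H2]]. exists d; split; auto. intros t Ht.
  destruct (Req_dec (f t) (f 0)) as [E|E].
  - rewrite E, Rminus_diag, Rabs_R0; lra.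
  - apply H1. split. split. exact I. auto. simpl; unfold R_dist. apply H2; auto.
Qed.
Lemma rc_exp k : right_cont0 (fun x => exp (k * x)).
Proof.
  apply rc_cont. apply dl_cont with (l := exp (k*0) * k).
  apply (derivable_pt_lim_comp (fun x => k * x) exp 0 k).
  apply dl_eq with (k * 1). apply derivable_pt_lim_scal, derivable_pt_lim_id. ring.
  apply derivable_pt_lim_exp.
Qed.

Lemma dec_pos G G' a b : 0 < a <= b ->
  (forall t, a <= t <= b -> derivable_pt_lim G t (G' t)) ->
  (forall t, a < t < b -> G' t <= 0) -> G b <= G a.
Proof.
  intros Hab Hd Hn. destruct (Req_dec a b) as [->|Hne]; [lra|].
  destruct (MVT_cor2 G G' a b) as [c [Hc Hc2]]; [lra| auto |].
  assert (G' c <= 0) by (apply Hn; lra). nra.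
Qed.

Lemma dec_gen G G' a b : 0 <= a <= b ->
  (forall t, 0 < t <= b -> derivable_pt_lim G t (G' t)) ->
  (forall t, a < t < b -> G' t <= 0) -> right_cont0 G -> G b <= G a.
Proof.
  intros Hab Hd Hn Hrc. destruct (Req_dec a 0) as [Ha|Ha].
  - subst a. destruct (Req_dec b 0) as [->|Hb]; [lra|].
    apply Rnot_lt_le; intro Hlt.
    destruct (Hrc (G b - G 0)) as [d [Hd0 Hf]]; [lra|].
    set (s := Rmin d b / 2).
    assert (Hs0 : 0 < s) by (unfold s; apply Rmin_case; lra).
    assert (Hs1 : s < d /\ s < b) by (pose proof (Rmin_l d b); pose proof (Rmin_r d b); unfold s; lra).
    assert (G b <= G s).
    { apply (dec_pos G G'). lra. intros; apply Hd; lra. intros; apply Hn; lra. }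
    assert (Rabs (G s - G 0) < G b - G 0) by (apply Hf; lra).
    pose proof (Rle_abs (G s - G 0)). lra.
  - apply (dec_pos G G'). lra. intros; apply Hd; lra. auto.
Qed.

Lemma dexp f k t l : derivable_pt_lim f t l ->
  derivable_pt_lim (fun x => exp (k * x) * f x) t (exp (k * t) * (k * f t + l)).
Proof.
  intro H. apply dl_eq with (exp (k*t) * k * f t + exp (k*t) * l).
  apply (derivable_pt_lim_mult (fun x => exp (k*x)) f).
  apply dl_eq with (exp (k*t) * k).
  apply (derivable_pt_lim_comp (fun x => k * x) exp t k).
  apply dl_eq with (k * 1). apply derivable_pt_lim_scal, derivable_pt_lim_id. ring.
  apply derivable_pt_lim_exp. reflexivity. exact H. ring.
Qed.

Lemma norm3_le x y z : 0 <= x -> 0 <= y -> 0 <= z -> norm3 x y z <= x + y + z.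
Proof.
  intros. unfold norm3. rewrite <- (sqrt_square (x+y+z)) by lra.
  apply sqrt_le_1_alt. nra.
Qed.
Lemma norm3_ge x y z : Rabs x <= norm3 x y z /\ Rabs y <= norm3 x y z /\ Rabs z <= norm3 x y z.
Proof.
  unfold norm3. repeat split; rewrite <- sqrt_Rsqr_abs; apply sqrt_le_1_alt; unfold Rsqr; nra.
Qed.

Definition phi (u : R) := Rmin u 0 * Rmin u 0.

Lemma phi_bound u h : Rabs (phi (u + h) - phi u - 2 * Rmin u 0 * h) <= h * h.
Proof.
  unfold phi. destruct (Rle_dec u 0); destruct (Rle_dec (u+h) 0).
  - rewrite (Rmin_left u) by lra. rewrite (Rmin_left (u+h)) by lra. apply Rabs_le; split; nra.
  - rewrite (Rmin_left u) by lra. rewrite (Rmin_right (u+h)) by lra. apply Rabs_le; split; nra.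
  - rewrite (Rmin_right u) by lra. rewrite (Rmin_left (u+h)) by lra. apply Rabs_le; split; nra.
  - rewrite (Rmin_right u) by lra. rewrite (Rmin_right (u+h)) by lra. apply Rabs_le; split; nra.
Qed.

Lemma phi_der u : derivable_pt_lim phi u (2 * Rmin u 0).
Proof.
  intros eps Heps. exists (mkposreal eps Heps). simpl. intros h Hh Hlt.
  assert (Habs : 0 < Rabs h) by (apply Rabs_pos_lt; auto).
  replace ((phi (u + h) - phi u) / h - 2 * Rmin u 0) with
     ((phi (u + h) - phi u - 2 * Rmin u 0 * h) / h) by (field; auto).
  unfold Rdiv. rewrite Rabs_mult, Rabs_inv.
  apply Rle_lt_trans with (h * h * / Rabs h).
  apply Rmult_le_compat_r. left; apply Rinv_0_lt_compat; auto. apply phi_bound.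
  replace (h * h) with (Rabs h * Rabs h).
  field_simplify; lra. rewrite <- Rabs_mult. apply Rabs_right. nra.
Qed.

Lemma phi_cont u : continuity_pt phi u.
Proof. eapply dl_cont. apply phi_der. Qed.

Lemma bound_F (F : R -> R) t : 0 < t -> right_cont0 F ->
  (forall s, 0 < s -> continuity_pt F s) ->
  exists B, forall s, 0 <= s <= t -> Rabs (F s) <= B.
Proof.
  intros Ht Hrc Hc. destruct (Hrc 1) as [d [Hd Hf]]; [lra|].
  set (s0 := Rmin (d/2) t).
  assert (0 < s0 <= t /\ s0 < d) by (pose proof (Rmin_l (d/2) t); pose proof (Rmin_r (d/2) t);
     unfold s0; split; [split|]; [apply Rmin_case; lra| lra | lra]).
  destruct (continuity_ab_maj F s0 t) as [Mx [HM HMr]]; [lra| intros; apply Hc; lra|].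
  destruct (continuity_ab_min F s0 t) as [mx [Hm Hmr]]; [lra| intros; apply Hc; lra|].
  exists (Rabs (F 0) + 1 + Rabs (F Mx) + Rabs (F mx)). intros s Hs.
  pose proof (Rabs_pos (F 0)); pose proof (Rabs_pos (F Mx)); pose proof (Rabs_pos (F mx)).
  destruct (Rlt_dec s d).
  - pose proof (Hf s (conj (proj1 Hs) r)).
    pose proof (Rabs_triang_inv (F s) (F 0)). lra.
  - assert (s0 <= s <= t) by lra.
    pose proof (HM s H3); pose proof (Hm s H3).
    pose proof (Rle_abs (F Mx)); pose proof (Rle_abs (- F mx)). rewrite Rabs_Ropp in H7.
    apply Rabs_le; lra.
Qed.

Lemma nonnegEF bE nuE dE dM dF K nu E M F :
  0 < bE -> 0 < nuE -> 0 < dE -> 0 < dM -> 0 < dF -> 0 < K -> 0 < nu < 1 ->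
  is_solution bE nuE dE dM dF K nu E M F -> inD (E 0) (M 0) (F 0) ->
  forall t, 0 <= t -> 0 <= E t /\ 0 <= F t.
Proof.
  intros HbE HnuE HdE HdM HdF HK Hnu [Hder [HrE [HrM HrF]]] [HE0 [HM0 HF0]] t Ht.
  destruct (Req_dec t 0) as [->|Ht0]; [auto|].
  assert (Htp : 0 < t) by lra.
  destruct (bound_F F t Htp HrF) as [B HB].
  { intros s Hs. destruct (Hder s Hs) as [_ [_ H]]. eapply dl_cont; eauto. }
  set (C := bE + nu * nuE + 2 * bE * B / K).
  set (G := fun s => exp ((- C) * s) * (phi (E s) + phi (F s))).
  set (G' := fun s => exp ((- C) * s) * ((- C) * (phi (E s) + phi (F s)) +
      (2 * Rmin (E s) 0 * (bE * F s * (1 - E s / K) - (nuE + dE) * E s) +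
       2 * Rmin (F s) 0 * (nu * nuE * E s - dF * F s)))).
  assert (HG : G t <= G 0).
  { apply (dec_gen G G'). lra.
    - intros s Hs. destruct (Hder s (proj1 Hs)) as [H1 [_ H3]].
      apply (dexp (fun x => phi (E x) + phi (F x))).
      apply (derivable_pt_lim_plus (fun x => phi (E x)) (fun x => phi (F x))).
      + apply dl_eq with (2 * Rmin (E s) 0 * (bE * F s * (1 - E s / K) - (nuE + dE) * E s)).
        apply (derivable_pt_lim_comp E phi). exact H1. apply phi_der. ring.
      + apply dl_eq with (2 * Rmin (F s) 0 * (nu * nuE * E s - dF * F s)).
        apply (derivable_pt_lim_comp F phi). exact H3. apply phi_der. ring.
    - intros s Hs. unfold G'. 
      assert (Hex : 0 < exp ((-C) * s)) by apply exp_pos.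
      assert (HBs : Rabs (F s) <= B) by (apply HB; lra).
      pose proof (Rle_abs (F s)); pose proof (Rle_abs (- F s)); rewrite Rabs_Ropp in *. 
      assert (Hk : 0 < / K) by (apply Rinv_0_lt_compat; auto).
      assert (Hin : (- C) * (phi (E s) + phi (F s)) +
       (2 * Rmin (E s) 0 * (bE * F s * (1 - E s / K) - (nuE + dE) * E s) +
       2 * Rmin (F s) 0 * (nu * nuE * E s - dF * F s)) <= 0).
      { unfold C, phi, Rdiv. set (e := E s) in *. set (f := F s) in *. set (k := / K) in *.
        assert (0 < nu * nuE) by nra.
        destruct (Rle_dec e 0); destruct (Rle_dec f 0).
        - rewrite (Rmin_left e), (Rmin_left f) by lra.
          assert (0 <= (B + f) * (e * e) * k) by (apply Rmult_le_pos; [apply Rmult_le_pos; nra|lra]).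
          assert (0 <= B) by lra.
          assert (0 <= bE * ((B + f) * (e * e) * k)) by (apply Rmult_le_pos; lra).
          assert (0 <= bE * ((e - f) * (e - f))) by (apply Rmult_le_pos; [lra| apply Rle_0_sqr]).
          assert (0 <= nu * nuE * ((e - f) * (e - f))) by (apply Rmult_le_pos; [lra| apply Rle_0_sqr]).
          assert (0 <= bE * B * k * (f * f)) by (apply Rmult_le_pos; [apply Rmult_le_pos; [apply Rmult_le_pos|]|]; nra).
          assert (0 <= (nuE + dE) * (e * e)) by (apply Rmult_le_pos; nra).
          assert (0 <= dF * (f * f)) by (apply Rmult_le_pos; nra).
          nra.
        - rewrite (Rmin_left e), (Rmin_right f) by lra.
          assert (0 <= e * e) by apply Rle_0_sqr.
          assert (0 <= f) by lra.
          assert (0 <= bE * (f * (e * e) * k)) by (apply Rmult_le_pos; [lra|]; apply Rmult_le_pos; [apply Rmult_le_pos|]; lra).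
          assert (0 <= bE * (-e) * f) by (apply Rmult_le_pos; [apply Rmult_le_pos|]; lra).
          assert (0 <= B) by lra.
          assert (0 <= bE * B * k * (e * e)) by (apply Rmult_le_pos; [apply Rmult_le_pos; [apply Rmult_le_pos|]|]; lra).
          assert (0 <= (nuE + dE) * (e * e)) by (apply Rmult_le_pos; lra).
          assert (0 <= (bE + nu * nuE) * (e * e)) by (apply Rmult_le_pos; lra).
          nra.
        - rewrite (Rmin_right e), (Rmin_left f) by lra.
          assert (0 <= f * f) by apply Rle_0_sqr.
          assert (0 <= B) by lra.
          assert (0 <= bE * B * k * (f * f)) by (apply Rmult_le_pos; [apply Rmult_le_pos; [apply Rmult_le_pos|]|]; lra).
          assert (0 <= nu * nuE * e * (-f)) by (apply Rmult_le_pos; [apply Rmult_le_pos|]; lra).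
          assert (0 <= dF * (f * f)) by (apply Rmult_le_pos; lra).
          assert (0 <= (bE + nu * nuE) * (f * f)) by (apply Rmult_le_pos; lra).
          nra.
        - rewrite (Rmin_right e), (Rmin_right f) by lra. lra. }
      nra.
    - apply rc_mult. apply rc_exp. apply rc_plus; apply rc_comp; auto; apply phi_cont. }
  unfold G in HG. rewrite Rmult_0_r, exp_0 in HG.
  unfold phi in HG. rewrite (Rmin_right (E 0)), (Rmin_right (F 0)) in HG by lra.
  pose proof (exp_pos ((-C) * t)).
  assert (Hh : Rmin (E t) 0 * Rmin (E t) 0 + Rmin (F t) 0 * Rmin (F t) 0 <= 0) by nra.
  split; apply Rnot_lt_le; intro Hlt.
  - rewrite (Rmin_left (E t)) in Hh by lra. nra.
  - rewrite (Rmin_left (F t)) in Hh by lra. nra.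
Qed.

Lemma nonnegM bE nuE dE dM dF K nu E M F :
  0 < bE -> 0 < nuE -> 0 < dE -> 0 < dM -> 0 < dF -> 0 < K -> 0 < nu < 1 ->
  is_solution bE nuE dE dM dF K nu E M F -> inD (E 0) (M 0) (F 0) ->
  forall t, 0 <= t -> 0 <= M t.
Proof.
  intros HbE HnuE HdE HdM HdF HK Hnu Hs HD t Ht.
  pose proof (nonnegEF _ _ _ _ _ _ _ _ _ _ HbE HnuE HdE HdM HdF HK Hnu Hs HD) as HEF.
  destruct Hs as [Hder [HrE [HrM HrF]]]. destruct HD as [HE0 [HM0 HF0]].
  assert (HG : exp (dM * t) * (- M t) <= exp (dM * 0) * (- M 0)).
  { apply (dec_gen (fun s => exp (dM * s) * (- M s))
       (fun s => exp (dM * s) * (dM * (- M s) + - ((1 - nu) * nuE * E s - dM * M s)))).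
    lra.
    - intros s Hs. apply (dexp (fun x => - M x)). apply (derivable_pt_lim_opp M). apply (Hder s (proj1 Hs)).
    - intros s Hs. pose proof (exp_pos (dM * s)). destruct (HEF s) as [HE _]; [lra|].
      assert (0 <= (1 - nu) * nuE * E s) by (apply Rmult_le_pos; [apply Rmult_le_pos|]; lra).
      nra.
    - apply rc_mult. apply rc_exp. apply (rc_comp Ropp M); auto.
      change (continuity_pt (opp_fct id) (M 0)). apply continuity_pt_opp.
      apply derivable_continuous_pt, derivable_pt_id. }
  rewrite Rmult_0_r, exp_0 in HG. pose proof (exp_pos (dM * t)).
  apply Rnot_lt_le; intro Hlt. assert (0 < exp (dM * t) * (- M t)) by (apply Rmult_lt_0_compat; lra). lra.
Qed.

Lemma Mbound bE nuE dE dM dF K nu E M F a c :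
  0 < dM -> is_solution bE nuE dE dM dF K nu E M F -> 0 <= a ->
  (forall s, a < s -> (1 - nu) * nuE * E s <= dM * c) ->
  forall t, a <= t -> exp (dM * t) * (M t - c) <= exp (dM * a) * (M a - c).
Proof.
  intros HdM [Hder [HrE [HrM HrF]]] Ha Hc t Ht.
  apply (dec_gen (fun s => exp (dM * s) * (M s - c))
       (fun s => exp (dM * s) * (dM * (M s - c) + ((1 - nu) * nuE * E s - dM * M s)))).
  lra.
  - intros s Hs. apply (dexp (fun x => M x - c)). apply dl_eq with (((1 - nu) * nuE * E s - dM * M s) - 0).
    apply (derivable_pt_lim_minus M (fun _ => c)). apply (Hder s (proj1 Hs)). apply derivable_pt_lim_const. ring.
  - intros s Hs. pose proof (exp_pos (dM * s)). pose proof (Hc s (proj1 Hs)). nra.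
  - apply rc_mult. apply rc_exp. apply (rc_plus M (fun _ => - c)); auto. apply rc_const.
Qed.

Lemma R0_le bE nuE dE dF nu : 0 < dF -> 0 < nuE -> 0 < dE ->
  basic_offspring bE nuE dE dF nu <= 1 -> bE * (nu * nuE) <= dF * (nuE + dE).
Proof.
  unfold basic_offspring. intros. set (D := dF * (nuE + dE)) in *.
  assert (0 < D) by (unfold D; nra).
  replace (bE * (nu * nuE)) with (bE * nu * nuE / D * D) by (field; lra). nra.
Qed.

Lemma Vdec bE nuE dE dM dF K nu E M F :
  0 < bE -> 0 < nuE -> 0 < dE -> 0 < dM -> 0 < dF -> 0 < K -> 0 < nu < 1 ->
  bE * (nu * nuE) <= dF * (nuE + dE) ->
  is_solution bE nuE dE dM dF K nu E M F -> inD (E 0) (M 0) (F 0) ->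
  forall t1 t2, 0 <= t1 <= t2 ->
  nu * nuE * E t2 + (nuE + dE) * F t2 <= nu * nuE * E t1 + (nuE + dE) * F t1.
Proof.
  intros HbE HnuE HdE HdM HdF HK Hnu HR Hs HD t1 t2 Ht.
  pose proof (nonnegEF _ _ _ _ _ _ _ _ _ _ HbE HnuE HdE HdM HdF HK Hnu Hs HD) as HEF.
  destruct Hs as [Hder [HrE [HrM HrF]]].
  apply (dec_gen (fun s => nu * nuE * E s + (nuE + dE) * F s)
     (fun s => nu * nuE * (bE * F s * (1 - E s / K) - (nuE + dE) * E s)
          + (nuE + dE) * (nu * nuE * E s - dF * F s))). lra.
  - intros s Hs. destruct (Hder s (proj1 Hs)) as [H1 [_ H3]].
    apply (derivable_pt_lim_plus (fun s => nu * nuE * E s) (fun s => (nuE + dE) * F s));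
    apply derivable_pt_lim_scal; auto.
  - intros s Hs. destruct (HEF s) as [HE HF]; [lra|].
    assert (0 <= F s * E s / K) by (apply Rmult_le_pos; [apply Rmult_le_pos|left; apply Rinv_0_lt_compat]; lra).
    assert (0 <= (dF * (nuE + dE) - bE * (nu * nuE)) * F s) by (apply Rmult_le_pos; lra).
    assert (0 <= bE * (nu * nuE) * (F s * E s / K)) by (apply Rmult_le_pos; [apply Rmult_le_pos|]; nra).
    replace (nu * nuE * (bE * F s * (1 - E s / K) - (nuE + dE) * E s) +
      (nuE + dE) * (nu * nuE * E s - dF * F s)) with
      (- ((dF * (nuE + dE) - bE * (nu * nuE)) * F s) - bE * (nu * nuE) * (F s * E s / K))
      by (field; lra). lra.
  - apply (rc_plus (fun s => nu * nuE * E s) (fun s => (nuE + dE) * F s));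
    apply (rc_mult (fun _ => _)); auto; apply rc_const.
Qed.

Lemma Vto0 bE nuE dE dM dF K nu E M F :
  0 < bE -> 0 < nuE -> 0 < dE -> 0 < dM -> 0 < dF -> 0 < K -> 0 < nu < 1 ->
  bE * (nu * nuE) <= dF * (nuE + dE) ->
  is_solution bE nuE dE dM dF K nu E M F -> inD (E 0) (M 0) (F 0) ->
  forall L, 0 < L -> exists T, 0 <= T /\ nu * nuE * E T + (nuE + dE) * F T < L.
Proof.
  intros HbE HnuE HdE HdM HdF HK Hnu HR Hs HD L HL.
  pose proof (nonnegEF _ _ _ _ _ _ _ _ _ _ HbE HnuE HdE HdM HdF HK Hnu Hs HD) as HEF.
  pose proof (Vdec _ _ _ _ _ _ _ _ _ _ HbE HnuE HdE HdM HdF HK Hnu HR Hs HD) as HV.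
  destruct (classic (exists T, 0 <= T /\ nu * nuE * E T + (nuE + dE) * F T < L)) as [H|H]; [exact H|].
  exfalso.
  assert (HVL : forall t, 0 <= t -> L <= nu * nuE * E t + (nuE + dE) * F t).
  { intros t Ht. apply Rnot_lt_le. intro. apply H. exists t; auto. }
  destruct Hs as [Hder [HrE [HrM HrF]]]. destruct HD as [HE0 [HM0 HF0]].
  set (b := nu * nuE) in *. set (a := nuE + dE) in *. set (d := dF) in *.
  assert (Hb : 0 < b) by (unfold b; nra). assert (Ha : 0 < a) by (unfold a; lra).
  set (m := L / (a + d)).
  assert (Hm : 0 < m) by (unfold m; apply Rdiv_lt_0_compat; lra).
  assert (HF1 : forall t, 0 <= t -> exp ((a + d) * t) * (m - F t) <= exp ((a + d) * 0) * (m - F 0)).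
  { intros t Ht.
    apply (dec_gen (fun s => exp ((a + d) * s) * (m - F s))
       (fun s => exp ((a + d) * s) * ((a + d) * (m - F s) + (0 - (nu * nuE * E s - dF * F s))))).
    lra.
    - intros s Hs. apply (dexp (fun x => m - F x)).
      apply (derivable_pt_lim_minus (fun _ => m) F). apply derivable_pt_lim_const.
      apply (Hder s (proj1 Hs)).
    - intros s Hs. pose proof (exp_pos ((a + d) * s)). pose proof (HVL s ltac:(lra)).
      assert ((a + d) * m = L) by (unfold m; field; lra).
      assert ((a + d) * (m - F s) + (0 - (nu * nuE * E s - dF * F s)) <= 0).
      { unfold b, a, d in *. nra. }
      nra.
    - apply rc_mult. apply rc_exp. apply (rc_plus (fun _ => m) (fun x => - F x)). apply rc_const.
      apply (rc_comp Ropp F); auto.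
      change (continuity_pt (opp_fct id) (F 0)). apply continuity_pt_opp.
      apply derivable_continuous_pt, derivable_pt_id. }
  set (T1 := 1 / (a + d)).
  assert (HT1 : 0 < T1) by (unfold T1; apply Rdiv_lt_0_compat; lra).
  assert (HFm : forall t, T1 <= t -> m / 2 <= F t).
  { intros t Ht. pose proof (HF1 t ltac:(lra)). rewrite Rmult_0_r, exp_0 in H0.
    pose proof (exp_ineq1_le ((a + d) * t)).
    assert ((a + d) * t >= 1) by (unfold T1 in Ht; apply Rle_ge;
      apply Rmult_le_reg_r with (/ (a + d)); [apply Rinv_0_lt_compat; lra|];
      replace ((a + d) * t * / (a + d)) with t by (field; lra); unfold Rdiv in Ht; lra).
    apply Rnot_lt_le; intro Hc.
    assert (m / 2 < m - F t) by lra.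
    assert (exp ((a + d) * t) * (m / 2) <= exp ((a + d) * t) * (m - F t)) by (apply Rmult_le_compat_l; lra).
    pose proof (HF0). nra. }
  set (c' := bE * b / K).
  assert (Hc' : 0 < c') by (unfold c'; apply Rdiv_lt_0_compat; nra).
  set (th := c' * m / (4 * b)).
  assert (Hth : 0 < th) by (unfold th; apply Rdiv_lt_0_compat; nra).
  assert (Hthb : th * b = c' * m / 4) by (unfold th; field; lra).
  set (ka := th * d / (d + a + th)).
  assert (Hka : 0 < ka) by (unfold ka; apply Rdiv_lt_0_compat; nra).
  assert (Hkae : ka * (d + a + th) = th * d) by (unfold ka; field; lra).
  assert (Hkth : ka <= th) by nra.
  set (V3 := fun s => b * E s + (a + th) * F s).
  assert (HG3 : forall t, T1 <= t -> exp (ka * t) * V3 t <= exp (ka * T1) * V3 T1).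
  { intros t Ht.
    apply (dec_gen (fun s => exp (ka * s) * V3 s)
       (fun s => exp (ka * s) * (ka * V3 s + (b * (bE * F s * (1 - E s / K) - a * E s)
           + (a + th) * (b * E s - d * F s))))). lra.
    - intros s Hs. apply (dexp V3). destruct (Hder s (proj1 Hs)) as [H1 [_ H3]].
      apply (derivable_pt_lim_plus (fun s => b * E s) (fun s => (a + th) * F s));
      apply derivable_pt_lim_scal; auto.
    - intros s Hs. pose proof (exp_pos (ka * s)).
      destruct (HEF s) as [HE HF]; [lra|]. pose proof (HFm s ltac:(lra)).
      assert (Hin : ka * V3 s + (b * (bE * F s * (1 - E s / K) - a * E s)
           + (a + th) * (b * E s - d * F s)) <= 0).
      { unfold V3.
        replace (b * (bE * F s * (1 - E s / K) - a * E s) + (a + th) * (b * E s - d * F s))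
          with ((bE * b - d * a) * F s - c' * (F s * E s) + th * b * E s - th * d * F s)
          by (unfold c'; field; lra).
        rewrite Hthb.
        assert (0 <= (d * a - bE * b) * F s) by (apply Rmult_le_pos; unfold d, a, b in *; lra).
        assert (0 <= c' * ((F s - m / 2) * E s)) by (apply Rmult_le_pos; [lra|apply Rmult_le_pos; lra]).
        assert (0 <= (th - ka) * b * E s) by (apply Rmult_le_pos; [apply Rmult_le_pos|]; lra).
        assert (0 <= ka * d * F s) by (apply Rmult_le_pos; [apply Rmult_le_pos|]; unfold d in *; lra).
        nra. }
      nra.
    - apply rc_mult. apply rc_exp. unfold V3.
      apply (rc_plus (fun s => b * E s) (fun s => (a + th) * F s));
      apply (rc_mult (fun _ => _)); auto; apply rc_const. }
  set (C0 := exp (ka * T1) * V3 T1).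
  assert (HC0 : 0 <= C0).
  { unfold C0, V3. destruct (HEF T1) as [HE HF]; [lra|]. pose proof (exp_pos (ka * T1)).
    apply Rmult_le_pos; [lra|]. nra. }
  set (t := T1 + C0 / (ka * L)).
  assert (Ht : T1 <= t) by (unfold t; assert (0 <= C0 / (ka * L)) by (unfold Rdiv; apply Rmult_le_pos; [lra| left; apply Rinv_0_lt_compat; nra]); lra).
  pose proof (HG3 t Ht). fold C0 in H0.
  assert (HV3 : L <= V3 t).
  { unfold V3. pose proof (HVL t ltac:(lra)). destruct (HEF t) as [HE HF]; [lra|]. nra. }
  pose proof (exp_ineq1_le (ka * t)).
  assert (ka * t >= C0 / L).
  { unfold t. rewrite Rmult_plus_distr_l.
    replace (ka * (C0 / (ka * L))) with (C0 / L) by (field; lra). nra. }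
  assert (C0 / L * L = C0) by (field; lra).
  assert (exp (ka * t) * L >= (1 + C0 / L) * L) by (apply Rle_ge, Rmult_le_compat_r; lra).
  assert (exp (ka * t) * L <= exp (ka * t) * V3 t) by (apply Rmult_le_compat_l; [pose proof (exp_pos (ka*t)); lra| lra]).
  nra.
Qed.

Theorem theorem1 (bE nuE dE dM dF K nu : R)
  (HbE : 0 < bE) (HnuE : 0 < nuE) (HdE : 0 < dE) (HdM : 0 < dM)
  (HdF : 0 < dF) (HK : 0 < K) (Hnu : 0 < nu < 1)
  (HR0 : basic_offspring bE nuE dE dF nu <= 1) :
  GAS0_in_D bE nuE dE dM dF K nu.
Proof.
  pose proof (R0_le bE nuE dE dF nu HdF HnuE HdE HR0) as HR.
  set (b := nu * nuE) in *. set (a := nuE + dE) in *.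
  assert (Hb : 0 < b) by (unfold b; nra). assert (Ha : 0 < a) by (unfold a; lra).
  split.
  - intros eps Heps.
    set (Q := (a + b) / b + 1 + (1 - nu) * nuE * ((a + b) / b) / dM + (a + b) / a).
    assert (Hab1 : 0 < (a + b) / b) by (apply Rdiv_lt_0_compat; lra).
    assert (Hab2 : 0 < (a + b) / a) by (apply Rdiv_lt_0_compat; lra).
    assert (Hq3 : 0 <= (1 - nu) * nuE * ((a + b) / b) / dM).
    { unfold Rdiv. apply Rmult_le_pos; [|left; apply Rinv_0_lt_compat; lra].
      apply Rmult_le_pos; [apply Rmult_le_pos|]; lra. }
    assert (HQ : 0 < Q) by (unfold Q; lra).
    exists (eps / (2 * Q)). split; [apply Rdiv_lt_0_compat; lra|].
    intros E M F Hs HD Hn t Ht.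
    set (dl := eps / (2 * Q)) in *.
    assert (Hdl : dl * Q = eps / 2) by (unfold dl; field; lra).
    destruct (norm3_ge (E 0) (M 0) (F 0)) as [N1 [N2 N3]].
    pose proof (Rle_abs (E 0)); pose proof (Rle_abs (M 0)); pose proof (Rle_abs (F 0)).
    pose proof (nonnegEF _ _ _ _ _ _ _ _ _ _ HbE HnuE HdE HdM HdF HK Hnu Hs HD) as HEF.
    pose proof (nonnegM _ _ _ _ _ _ _ _ _ _ HbE HnuE HdE HdM HdF HK Hnu Hs HD) as HMn.
    pose proof (Vdec _ _ _ _ _ _ _ _ _ _ HbE HnuE HdE HdM HdF HK Hnu HR Hs HD) as HV.
    destruct HD as [HE0 [HM0 HF0]].
    set (Eb := (a + b) / b * dl). set (Fb := (a + b) / a * dl).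
    assert (HV0 : forall s, 0 <= s -> b * E s + a * F s <= (a + b) * dl).
    { intros s Hs0. pose proof (HV 0 s ltac:(lra)). unfold b, a in *. nra. }
    assert (HEb : forall s, 0 <= s -> E s <= Eb).
    { intros s Hs0. pose proof (HV0 s Hs0). destruct (HEF s Hs0).
      unfold Eb. apply Rmult_le_reg_l with b; [lra|].
      replace (b * ((a + b) / b * dl)) with ((a + b) * dl) by (field; lra). nra. }
    assert (HFb : forall s, 0 <= s -> F s <= Fb).
    { intros s Hs0. pose proof (HV0 s Hs0). destruct (HEF s Hs0).
      unfold Fb. apply Rmult_le_reg_l with a; [lra|].
      replace (a * ((a + b) / a * dl)) with ((a + b) * dl) by (field; lra). nra. }
    set (c := M 0 + (1 - nu) * nuE * Eb / dM).
    assert (HMb : M t <= c).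
    { pose proof (Mbound bE nuE dE dM dF K nu E M F 0 c HdM Hs ltac:(lra)) as HMB.
      assert (HH : forall s, 0 < s -> (1 - nu) * nuE * E s <= dM * c).
      { intros s Hs0. pose proof (HEb s ltac:(lra)).
        unfold c. replace (dM * (M 0 + (1 - nu) * nuE * Eb / dM)) with (dM * M 0 + (1 - nu) * nuE * Eb)
          by (field; lra).
        assert (0 <= (1 - nu) * nuE) by (apply Rmult_le_pos; lra).
        assert (0 <= dM * M 0) by (apply Rmult_le_pos; lra). nra. }
      pose proof (HMB HH t ltac:(lra)). rewrite Rmult_0_r, exp_0 in H2.
      pose proof (exp_pos (dM * t)).
      assert (0 <= (1 - nu) * nuE * Eb / dM).
      { unfold Eb. replace ((1 - nu) * nuE * ((a + b) / b * dl) / dM) with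
          ((1 - nu) * nuE * ((a + b) / b) / dM * dl) by (field; lra).
        apply Rmult_le_pos; lra. }
      apply Rnot_lt_le; intro Hc. assert (0 < exp (dM * t) * (M t - c)) by (apply Rmult_lt_0_compat; lra).
      unfold c in *. lra. }
    destruct (HEF t ltac:(lra)) as [HEt HFt].
    eapply Rle_lt_trans. apply norm3_le; auto. apply HMn; lra.
    pose proof (HEb t ltac:(lra)); pose proof (HFb t ltac:(lra)).
    assert (Hsum : Eb + (dl + (1 - nu) * nuE * Eb / dM) + Fb = dl * Q).
    { unfold Eb, Fb, Q. field. lra. }
    unfold c in HMb. lra.
  - intros E M F Hs HD eps Heps.
    pose proof (nonnegEF _ _ _ _ _ _ _ _ _ _ HbE HnuE HdE HdM HdF HK Hnu Hs HD) as HEF.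
    pose proof (nonnegM _ _ _ _ _ _ _ _ _ _ HbE HnuE HdE HdM HdF HK Hnu Hs HD) as HMn.
    pose proof (Vdec _ _ _ _ _ _ _ _ _ _ HbE HnuE HdE HdM HdF HK Hnu HR Hs HD) as HV.
    set (e1 := eps / 3).
    set (eta := e1 * dM / (2 * (dM + nuE))).
    assert (He1 : 0 < e1) by (unfold e1; lra).
    assert (Heta : 0 < eta) by (unfold eta; apply Rdiv_lt_0_compat; nra).
    assert (Heta1 : eta <= e1 / 2).
    { unfold eta. apply Rmult_le_reg_r with (2 * (dM + nuE)); [lra|].
      replace (e1 * dM / (2 * (dM + nuE)) * (2 * (dM + nuE))) with (e1 * dM) by (field; lra). nra. }
    assert (Heta2 : (1 - nu) * nuE * eta <= dM * (e1 / 2)).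
    { assert (eta * (2 * (dM + nuE)) = e1 * dM) by (unfold eta; field; lra).
      assert (0 <= nu * nuE * eta) by (apply Rmult_le_pos; [apply Rmult_le_pos|]; lra).
      assert (0 <= dM * eta) by (apply Rmult_le_pos; lra). lra. }
    set (L := eta * Rmin a b).
    assert (HL : 0 < L) by (unfold L; apply Rmult_lt_0_compat; [lra| apply Rmin_pos; lra]).
    destruct (Vto0 _ _ _ _ _ _ _ _ _ _ HbE HnuE HdE HdM HdF HK Hnu HR Hs HD L HL) as [T0 [HT0 HVT0]].
    set (T1 := T0 + 1).
    assert (HEF1 : forall s, T1 <= s -> E s < eta /\ F s < eta).
    { intros s Hs0. pose proof (HV T0 s ltac:(unfold T1 in *; lra)). destruct (HEF s ltac:(unfold T1 in *; lra)).
      pose proof (Rmin_l a b); pose proof (Rmin_r a b).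
      assert (eta * Rmin a b <= eta * b) by (apply Rmult_le_compat_l; lra).
      assert (eta * Rmin a b <= eta * a) by (apply Rmult_le_compat_l; lra).
      unfold L in HVT0. unfold b, a in *.
      assert (0 <= nu * nuE * E s) by (apply Rmult_le_pos; [apply Rmult_le_pos|]; lra).
      assert (0 <= (nuE + dE) * F s) by (apply Rmult_le_pos; lra).
      split; apply Rnot_le_lt; intro Hc.
      + assert (nu * nuE * eta <= nu * nuE * E s) by (apply Rmult_le_compat_l; [apply Rmult_le_pos|]; lra). lra.
      + assert ((nuE + dE) * eta <= (nuE + dE) * F s) by (apply Rmult_le_compat_l; lra). lra. }
    set (c := (1 - nu) * nuE * eta / dM).
    assert (Hc1 : c <= e1 / 2).
    { unfold c. apply Rmult_le_reg_r with dM; [lra|].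
      replace ((1 - nu) * nuE * eta / dM * dM) with ((1 - nu) * nuE * eta) by (field; lra). lra. }
    assert (Hc0 : 0 <= c).
    { unfold c, Rdiv. apply Rmult_le_pos; [|left; apply Rinv_0_lt_compat; lra].
      apply Rmult_le_pos; [apply Rmult_le_pos|]; lra. }
    pose proof (Mbound bE nuE dE dM dF K nu E M F T1 c HdM Hs ltac:(unfold T1; lra)) as HMB.
    assert (HH : forall s, T1 < s -> (1 - nu) * nuE * E s <= dM * c).
    { intros s Hs0. destruct (HEF1 s ltac:(lra)). unfold c.
      replace (dM * ((1 - nu) * nuE * eta / dM)) with ((1 - nu) * nuE * eta) by (field; lra).
      assert (0 <= (1 - nu) * nuE) by (apply Rmult_le_pos; lra). nra. }
    specialize (HMB HH).
    set (C1 := exp (dM * T1) * M T1).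
    assert (HC1 : 0 <= C1) by (unfold C1; pose proof (exp_pos (dM * T1)); pose proof (HMn T1 ltac:(unfold T1; lra)); nra).
    exists (T1 + 2 * C1 / (e1 * dM)). intros t Ht.
    assert (Hq : 0 <= 2 * C1 / (e1 * dM)).
    { unfold Rdiv. apply Rmult_le_pos; [lra| left; apply Rinv_0_lt_compat; nra]. }
    pose proof (HMB t ltac:(lra)).
    assert (exp (dM * T1) * (M T1 - c) <= C1) by (unfold C1; pose proof (exp_pos (dM * T1)); nra).
    pose proof (exp_ineq1_le (dM * t)).
    assert (dM * t >= 2 * C1 / e1).
    { assert (dM * (2 * C1 / (e1 * dM)) = 2 * C1 / e1) by (field; lra).
      assert (0 <= dM * T1) by (unfold T1; nra). nra. }
    assert (2 * C1 / e1 * (e1 / 2) = C1) by (field; lra).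
    assert (HMt : M t < c + e1 / 2).
    { apply Rnot_le_lt; intro Hc.
      assert (exp (dM * t) * (e1 / 2) <= exp (dM * t) * (M t - c)) by
        (apply Rmult_le_compat_l; [pose proof (exp_pos (dM * t)); lra | lra]).
      assert ((1 + 2 * C1 / e1) * (e1 / 2) <= exp (dM * t) * (e1 / 2)) by (apply Rmult_le_compat_r; lra).
      nra. }
    destruct (HEF1 t ltac:(lra)). destruct (HEF t ltac:(unfold T1 in *; lra)).
    eapply Rle_lt_trans. apply norm3_le; auto. apply HMn; unfold T1 in *; lra.
    unfold e1 in *. lra.
Qed.
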